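(* Let $P,Q\in\Gamma_n$ and $0<r\le R$ with $r\le p_i/q_i\le R$ for all $i$. Let $s,t\in\mathbb{R}$ with $0\le s\le4$. If $t\le-1$ and $s+t\le1$, then $$\Big(\frac{r+1}{2r}\Big)^{s-3}\frac{(4-s)r+s}{4r^{t+2}}\Phi_t(P\|Q)\le\zeta_s(Q\|P)\le\Big(\frac{R+1}{2R}\Big)^{s-3}\frac{(4-s)R+s}{4R^{t+2}}\Phi_t(P\|Q).$$ If $t\ge-1$ and $s+t\ge2$, then $$\Big(\frac{R+1}{2R}\Big)^{s-3}\frac{(4-s)R+s}{4R^{t+2}}\Phi_t(P\|Q)\le\zeta_s(Q\|P)\le\Big(\frac{r+1}{2r}\Big)^{s-3}\frac{(4-s)r+s}{4r^{t+2}}\Phi_t(P\|Q).$$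
   Context: $\Gamma_n=\{P=(p_1,\dots,p_n): p_i>0,\ \sum_i p_i=1\}$, $n\ge2$. For $P,Q\in\Gamma_n$ and $s\in\mathbb{R}$: $\Phi_s(P\|Q)=[s(s-1)]^{-1}\big[\sum_i p_i^s q_i^{1-s}-1\big]$ for $s\ne0,1$; $\Phi_0(P\|Q)=\sum_i q_i\ln(q_i/p_i)$; $\Phi_1(P\|Q)=\sum_i p_i\ln(p_i/q_i)$. $\zeta_s(Q\|P)=(s-1)^{-1}\sum_i(q_i-p_i)\big(\frac{p_i+q_i}{2p_i}\big)^{s-1}$ for $s\ne1$; $\zeta_1(Q\|P)=\sum_i(q_i-p_i)\ln\frac{p_i+q_i}{2p_i}$. *)

(* Defs.v *)
From Stdlib Require Import Reals.
Open Scope R_scope.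

Fixpoint rsum (n : nat) (f : nat -> R) : R :=
  match n with
  | O => 0
  | S m => rsum m f + f m
  end.

Definition in_Gamma (n : nat) (p : nat -> R) : Prop :=
  (forall i, (i < n)%nat -> 0 < p i) /\ rsum n p = 1.

Definition Phi (n : nat) (s : R) (p q : nat -> R) : R :=
  if Req_EM_T s 0 then rsum n (fun i => q i * ln (q i / p i))
  else if Req_EM_T s 1 then rsum n (fun i => p i * ln (p i / q i))
  else / (s * (s - 1)) *
       (rsum n (fun i => Rpower (p i) s * Rpower (q i) (1 - s)) - 1).

Definition zeta (n : nat) (s : R) (q p : nat -> R) : R :=
  if Req_EM_T s 1 then
    rsum n (fun i => (q i - p i) * ln ((p i + q i) / (2 * p i)))
  else / (s - 1) *
       rsum n (fun i => (q i - p i) * Rpower ((p i + q i) / (2 * p i)) (s - 1)).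

Definition coef (s t x : R) : R :=
  Rpower ((x + 1) / (2 * x)) (s - 3) * (((4 - s) * x + s) / (4 * Rpower x (t + 2))).

(* Main.v *)
From Stdlib Require Import Reals Lra Lia Psatz.
From Coquelicot Require Import Coquelicot.
Require Import Defs.
Open Scope R_scope.

Lemma rsum_ext n f g : (forall i, (i < n)%nat -> f i = g i) -> rsum n f = rsum n g.
Proof. induction n; simpl; intros H; auto. rewrite IHn; [rewrite H; auto|intros; apply H; auto]. Qed.
Lemma rsum_plus n f g : rsum n (fun i => f i + g i) = rsum n f + rsum n g.
Proof. induction n; simpl; [ring|rewrite IHn; ring]. Qed.
Lemma rsum_scal n c f : rsum n (fun i => c * f i) = c * rsum n f.
Proof. induction n; simpl; [ring|rewrite IHn; ring]. Qed.
Lemma rsum_nonneg n f : (forall i, (i < n)%nat -> 0 <= f i) -> 0 <= rsum n f.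
Proof. induction n; simpl; intros H; [lra|]. assert (0 <= rsum n f) by (apply IHn; intros; apply H; lia). assert (0 <= f n) by (apply H; lia). lra. Qed.
Lemma rsum_lt n f g : (0 < n)%nat -> (forall i, (i < n)%nat -> f i < g i) -> rsum n f < rsum n g.
Proof. induction n; simpl; intros Hn H; [lia|]. destruct n.
 - simpl. assert (f 0%nat < g 0%nat) by (apply H; lia). lra.
 - assert (rsum (S n) f < rsum (S n) g) by (apply IHn; [lia|intros; apply H; lia]). assert (f (S n) < g (S n)) by (apply H; lia). lra. Qed.

Lemma convex_nonneg (h h1 h2 : R -> R) a b :
  0 < a -> a <= 1 <= b ->
  (forall x, 0 < x -> derivable_pt_lim h x (h1 x)) ->
  (forall x, 0 < x -> derivable_pt_lim h1 x (h2 x)) ->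
  h 1 = 0 -> h1 1 = 0 -> (forall x, a <= x <= b -> 0 <= h2 x) ->
  forall x, a <= x <= b -> 0 <= h x.
Proof.
  intros Ha Hab D1 D2 E0 E1 Hpos x Hx.
  destruct (Rtotal_order x 1) as [Hl|[He|Hg]].
  - destruct (MVT_cor2 h h1 x 1 Hl) as [c [Hc Hc2]].
    { intros; apply D1; lra. }
    destruct (MVT_cor2 h1 h2 c 1) as [d [Hd Hd2]]; [lra| |].
    { intros; apply D2; lra. }
    assert (0 <= h2 d) by (apply Hpos; lra).
    assert (h1 c <= 0) by nra. nra.
  - subst; lra.
  - destruct (MVT_cor2 h h1 1 x Hg) as [c [Hc Hc2]].
    { intros; apply D1; lra. }
    destruct (MVT_cor2 h1 h2 1 c) as [d [Hd Hd2]]; [lra| |].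
    { intros; apply D2; lra. }
    assert (0 <= h2 d) by (apply Hpos; lra).
    assert (0 <= h1 c) by nra. nra.
Qed.

Definition psi2 s x := exp ((s-3) * ln ((x+1)/(2*x))) * ((4-s)*x+s)/(4*x^4).

Lemma uu_pos x : 0 < x -> 0 < (x+1) * / (2*x).
Proof. intros; apply Rmult_lt_0_compat; [lra| apply Rinv_0_lt_compat; lra]. Qed.

Ltac sidec := repeat match goal with |- _ /\ _ => split end; try (apply uu_pos; lra); try (intro; nra); auto.

Ltac nz := repeat split; try assumption; try lra; try (intro; match goal with H: ?a <> ?b |- _ => apply H; lra end).

Lemma dpsiA s x : s <> 1 -> 0 < x ->
  is_derive (fun x => (x-1)*(1 - exp ((s-1)*ln ((x+1)/(2*x))))/(s-1)) x
   ((1 - exp((s-1)*ln((x+1)/(2*x))))/(s-1) + (x-1)*exp((s-2)*ln((x+1)/(2*x)))/(2*x^2)).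
Proof.
  intros Hs Hx. auto_derive.
  - split; [lra|split; [apply uu_pos; lra|auto]].
  - unfold Rdiv. set (L := ln ((x+1) * / (2*x))).
    replace ((s-1)*L) with ((s-2)*L + L) by ring. rewrite exp_plus.
    unfold L; rewrite exp_ln by (apply uu_pos; lra). field. repeat split; lra.
Qed.

Lemma dpsiA1 s x : s <> 1 -> 0 < x ->
  is_derive (fun x => (1 - exp((s-1)*ln((x+1)/(2*x))))/(s-1) + (x-1)*exp((s-2)*ln((x+1)/(2*x)))/(2*x^2)) x
   (psi2 s x).
Proof.
  intros Hs Hx. unfold psi2. auto_derive.
  - sidec.
  - unfold Rdiv. set (L := ln ((x+1) * / (2*x))).
    replace ((s-1)*L) with ((s-3)*L + L + L) by ring.
    replace ((s-2)*L) with ((s-3)*L + L) by ring. rewrite !exp_plus.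
    unfold L; rewrite exp_ln by (apply uu_pos; lra). field. repeat split; lra.
Qed.

Lemma dpsiB x : 0 < x ->
  is_derive (fun x => (1-x)*ln((x+1)/(2*x))) x (- ln((x+1)/(2*x)) + (x-1)/(x*(x+1))).
Proof.
  intros Hx. auto_derive.
  - split; [lra|split; [apply uu_pos; lra|auto]].
  - unfold Rdiv. field. lra.
Qed.

Lemma dpsiB1 x : 0 < x ->
  is_derive (fun x => - ln((x+1)/(2*x)) + (x-1)/(x*(x+1))) x (psi2 1 x).
Proof.
  intros Hx. unfold psi2. auto_derive.
  - sidec.
  - unfold Rdiv. set (L := ln ((x+1) * / (2*x))).
    replace ((1-3)*L) with (-(L + L)) by ring. rewrite exp_Ropp, !exp_plus.
    unfold L; rewrite exp_ln by (apply uu_pos; lra). field. lra.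
Qed.
Definition phi2 t x := exp ((t-2) * ln x).

Lemma dphiA t x : t <> 0 -> t <> 1 -> 0 < x ->
  is_derive (fun x => (exp (t*ln x) - 1 - t*(x-1))/(t*(t-1))) x ((exp ((t-1)*ln x) - 1)/(t-1)).
Proof.
  intros H0 H1 Hx. auto_derive.
  - sidec.
  - replace (t*ln x) with ((t-1)*ln x + ln x) by ring. rewrite exp_plus, exp_ln by lra.
    field. nz.
Qed.
Lemma dphiA1 t x : t <> 1 -> 0 < x ->
  is_derive (fun x => (exp ((t-1)*ln x) - 1)/(t-1)) x (phi2 t x).
Proof.
  intros H1 Hx. unfold phi2. auto_derive.
  - sidec.
  - replace ((t-1)*ln x) with ((t-2)*ln x + ln x) by ring. rewrite exp_plus, exp_ln by lra.
    field. nz.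
Qed.
Lemma dphiB x : 0 < x -> is_derive (fun x => x - 1 - ln x) x (1 - / x).
Proof. intros Hx. auto_derive. sidec. field. lra. Qed.
Lemma dphiB1 x : 0 < x -> is_derive (fun x => 1 - / x) x (phi2 0 x).
Proof. intros Hx. unfold phi2. auto_derive. sidec.
  replace ((0-2)*ln x) with (-(ln x + ln x)) by ring. rewrite exp_Ropp, exp_plus, exp_ln by lra.
  field. lra. Qed.
Lemma dphiC x : 0 < x -> is_derive (fun x => x * ln x - x + 1) x (ln x).
Proof. intros Hx. auto_derive. sidec. field. lra. Qed.
Lemma dphiC1 x : 0 < x -> is_derive (fun x => ln x) x (phi2 1 x).
Proof. intros Hx. unfold phi2. auto_derive. sidec.
  replace ((1-2)*ln x) with (-(ln x)) by ring. rewrite exp_Ropp, exp_ln by lra.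
  field. lra. Qed.

Lemma rsum_lin3 n a b c f p q :
  rsum n (fun i => a * f i + b * p i + c * q i) = a * rsum n f + b * rsum n p + c * rsum n q.
Proof. induction n; simpl; [ring|rewrite IHn; ring]. Qed.

Lemma psi_rep s : exists psi psi1 : R -> R,
  psi 1 = 0 /\ psi1 1 = 0 /\ (forall x, 0 < x -> is_derive psi x (psi1 x)) /\
  (forall x, 0 < x -> is_derive psi1 x (psi2 s x)) /\
  (forall n p q, in_Gamma n p -> in_Gamma n q ->
     zeta n s q p = rsum n (fun i => q i * psi (p i / q i))).
Proof.
  destruct (Req_EM_T s 1) as [Hs|Hs].
  - subst s. exists (fun x => (1-x)*ln((x+1)/(2*x))), (fun x => - ln((x+1)/(2*x)) + (x-1)/(x*(x+1))).
    split; [|split; [|split; [|split]]].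
    + ring.
    + replace ((1+1)/(2*1)) with 1 by field. rewrite ln_1. field.
    + intros; apply dpsiB; auto.
    + intros; apply dpsiB1; auto.
    + intros n p q [Hp _] [Hq _]. unfold zeta. destruct (Req_EM_T 1 1) as [_|C]; [|lra].
      apply rsum_ext. intros i Hi. specialize (Hp i Hi). specialize (Hq i Hi).
      replace ((p i / q i + 1) / (2 * (p i / q i))) with ((p i + q i)/(2*p i)) by (field; lra).
      field. lra.
  - exists (fun x => (x-1)*(1 - exp ((s-1)*ln ((x+1)/(2*x))))/(s-1)),
      (fun x => (1 - exp((s-1)*ln((x+1)/(2*x))))/(s-1) + (x-1)*exp((s-2)*ln((x+1)/(2*x)))/(2*x^2)).
    split; [|split; [|split; [|split]]].
    + field. lra.
    + replace ((1+1)/(2*1)) with 1 by field. rewrite ln_1, Rmult_0_r, exp_0. field. lra.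
    + intros; apply dpsiA; auto.
    + intros; apply dpsiA1; auto.
    + intros n p q [Hp Sp] [Hq Sq]. unfold zeta. destruct (Req_EM_T s 1) as [C|_]; [lra|].
      transitivity (rsum n (fun i => / (s-1) * ((q i - p i) * Rpower ((p i + q i) / (2 * p i)) (s - 1))
           + / (s-1) * p i + (- / (s-1)) * q i)).
      { rewrite rsum_lin3, Sp, Sq. ring. }
      apply rsum_ext. intros i Hi. specialize (Hp i Hi). specialize (Hq i Hi).
      replace ((p i / q i + 1) / (2 * (p i / q i))) with ((p i + q i)/(2*p i)) by (field; lra).
      unfold Rpower. field. split; lra.
Qed.

Lemma phi_rep t : exists phi phi1 : R -> R,
  phi 1 = 0 /\ phi1 1 = 0 /\ (forall x, 0 < x -> is_derive phi x (phi1 x)) /\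
  (forall x, 0 < x -> is_derive phi1 x (phi2 t x)) /\
  (forall n p q, in_Gamma n p -> in_Gamma n q ->
     Phi n t p q = rsum n (fun i => q i * phi (p i / q i))).
Proof.
  destruct (Req_EM_T t 0) as [H0|H0]; [|destruct (Req_EM_T t 1) as [H1|H1]].
  - subst t. exists (fun x => x - 1 - ln x), (fun x => 1 - / x). split; [|split; [|split; [|split]]].
    + rewrite ln_1; ring.
    + field.
    + intros; apply dphiB; auto.
    + intros; apply dphiB1; auto.
    + intros n p q [Hp Sp] [Hq Sq]. unfold Phi. destruct (Req_EM_T 0 0) as [_|C]; [|lra].
      transitivity (rsum n (fun i => 1 * (q i * ln (q i / p i)) + 1 * p i + (-1) * q i)).
      { rewrite rsum_lin3, Sp, Sq. ring. }
      apply rsum_ext. intros i Hi. specialize (Hp i Hi). specialize (Hq i Hi).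
      rewrite !ln_div by lra. field. lra.
  - subst t. exists (fun x => x * ln x - x + 1), (fun x => ln x). split; [|split; [|split; [|split]]].
    + rewrite ln_1; ring.
    + apply ln_1.
    + intros; apply dphiC; auto.
    + intros; apply dphiC1; auto.
    + intros n p q [Hp Sp] [Hq Sq]. unfold Phi. destruct (Req_EM_T 1 0) as [C|_]; [lra|].
      destruct (Req_EM_T 1 1) as [_|C]; [|lra].
      transitivity (rsum n (fun i => 1 * (p i * ln (p i / q i)) + (-1) * p i + 1 * q i)).
      { rewrite rsum_lin3, Sp, Sq. ring. }
      apply rsum_ext. intros i Hi. specialize (Hp i Hi). specialize (Hq i Hi).
      field. lra.
  - exists (fun x => (exp (t*ln x) - 1 - t*(x-1))/(t*(t-1))), (fun x => (exp ((t-1)*ln x) - 1)/(t-1)).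
    split; [|split; [|split; [|split]]].
    + rewrite ln_1, Rmult_0_r, exp_0. field. split; lra.
    + rewrite ln_1, Rmult_0_r, exp_0. field. lra.
    + intros; apply dphiA; auto.
    + intros; apply dphiA1; auto.
    + intros n p q [Hp Sp] [Hq Sq]. unfold Phi. destruct (Req_EM_T t 0) as [C|_]; [lra|].
      destruct (Req_EM_T t 1) as [C|_]; [lra|].
      transitivity (rsum n (fun i => / (t*(t-1)) * (Rpower (p i) t * Rpower (q i) (1 - t))
            + (- / (t-1)) * p i + (/ t) * q i)).
      { rewrite rsum_lin3, Sp, Sq. field. nz. }
      apply rsum_ext. intros i Hi. specialize (Hp i Hi). specialize (Hq i Hi).
      unfold Rpower. rewrite ln_div by lra.
      replace ((1-t) * ln (q i)) with (ln (q i) + - (t * ln (q i))) by ring.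
      replace (t * (ln (p i) - ln (q i))) with (t * ln (p i) + - (t * ln (q i))) by ring.
      rewrite !exp_plus, exp_ln by lra. field. repeat split; lra.
Qed.

Lemma exp_le a b : a <= b -> exp a <= exp b.
Proof. intros [H|H]; [left; apply exp_increasing; auto | subst; lra]. Qed.

Lemma psi2_coef s t y : 0 < y -> psi2 s y = coef s t y * phi2 t y.
Proof.
  intros Hy. unfold psi2, coef, phi2, Rpower.
  replace ((t+2)*ln y) with ((t-2)*ln y + ln y + ln y + ln y + ln y) by ring.
  rewrite !exp_plus, exp_ln by lra.
  assert (0 < exp ((t-2)*ln y)) by apply exp_pos.
  field. split; lra.
Qed.

Lemma B_pos s x : 0 <= s <= 4 -> 0 < x -> 0 < (4-s)*x+s.
Proof. intros Hs Hx. assert (0 <= (4-s)*x) by (apply Rmult_le_pos; lra).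
 destruct (Req_EM_T s 0). subst. lra. lra. Qed.

Definition Lc s t x := (s-3)*(ln (x+1) - ln 2 - ln x) + ln ((4-s)*x+s) - ln 4 - (t+2)*ln x.

Lemma coef_exp s t x : 0 <= s <= 4 -> 0 < x -> coef s t x = exp (Lc s t x).
Proof.
  intros Hs Hx. pose proof (B_pos s x Hs Hx). unfold coef, Lc, Rpower.
  rewrite ln_div, ln_mult by lra.
  replace ((s - 3) * (ln (x + 1) - ln 2 - ln x) + ln ((4 - s) * x + s) - ln 4 - (t + 2) * ln x)
    with ((s - 3) * (ln (x + 1) - (ln 2 + ln x)) + (ln ((4 - s) * x + s) + - (ln 4 + (t + 2) * ln x))) by ring.
  rewrite exp_plus, exp_plus, exp_Ropp, exp_plus, exp_ln, exp_ln by lra.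
  assert (0 < exp ((t+2)*ln x)) by apply exp_pos.
  field. lra.
Qed.

Definition Qp s t x := -(4-s)*(t+1)*x^2 + ((4-s)^2-4*t-8)*x - s*(s+t-1).

Lemma dLc s t x : 0 <= s <= 4 -> 0 < x ->
  derivable_pt_lim (Lc s t) x (Qp s t x / (x*(x+1)*((4-s)*x+s))).
Proof.
  intros Hs Hx. pose proof (B_pos s x Hs Hx). apply is_derive_Reals. unfold Lc, Qp. auto_derive.
  - repeat split; lra.
  - field. repeat split; lra.
Qed.

Lemma mono_incr (f f' : R -> R) :
  (forall x, 0 < x -> derivable_pt_lim f x (f' x)) -> (forall x, 0 < x -> 0 <= f' x) ->
  forall x y, 0 < x -> x <= y -> f x <= f y.
Proof.
  intros D P x y Hx Hxy. destruct (Req_EM_T x y). subst; lra.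
  destruct (MVT_cor2 f f' x y) as [c [Hc Hc2]]; [lra| intros; apply D; lra |].
  assert (0 <= f' c) by (apply P; lra). nra.
Qed.

Lemma coef_incr s t x y : 0 <= s <= 4 -> t <= -1 -> s + t <= 1 -> 0 < x -> x <= y ->
  coef s t x <= coef s t y.
Proof.
  intros Hs Ht Hst Hx Hxy. rewrite !coef_exp by lra. apply exp_le.
  apply (mono_incr (Lc s t) (fun x => Qp s t x / (x*(x+1)*((4-s)*x+s)))); auto.
  - intros; apply dLc; auto.
  - intros z Hz. pose proof (B_pos s z Hs Hz). apply Rmult_le_pos.
    + unfold Qp.
      assert (0 <= (4-s)*(-(t+1))) by (apply Rmult_le_pos; lra).
      assert (0 <= ((4-s)*(-(t+1)))*z^2) by (apply Rmult_le_pos; auto; apply pow2_ge_0).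
      assert (0 <= ((4-s)^2-4*t-8)) by (pose proof (Rle_0_sqr (s-2)); unfold Rsqr in *; simpl; lra).
      assert (0 <= ((4-s)^2-4*t-8)*z) by (apply Rmult_le_pos; lra).
      assert (0 <= s*(-(s+t-1))) by (apply Rmult_le_pos; lra). lra.
    + left. apply Rinv_0_lt_compat. apply Rmult_lt_0_compat; [apply Rmult_lt_0_compat|]; lra.
Qed.

Lemma coef_decr s t x y : 0 <= s <= 4 -> -1 <= t -> 2 <= s + t -> 0 < x -> x <= y ->
  coef s t y <= coef s t x.
Proof.
  intros Hs Ht Hst Hx Hxy. rewrite !coef_exp by lra. apply exp_le.
  apply Ropp_le_cancel.
  apply (mono_incr (fun z => - Lc s t z) (fun x => - (Qp s t x / (x*(x+1)*((4-s)*x+s))))); auto.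
  - intros; apply derivable_pt_lim_opp; apply dLc; auto.
  - intros z Hz. pose proof (B_pos s z Hs Hz).
    cut (0 <= (- Qp s t z) * / (z*(z+1)*((4-s)*z+s))). { unfold Rdiv; intros; lra. }
    apply Rmult_le_pos.
    + unfold Qp.
      assert (0 <= (4-s)*((t+1))) by (apply Rmult_le_pos; lra).
      assert (0 <= ((4-s)*((t+1)))*z^2) by (apply Rmult_le_pos; auto; apply pow2_ge_0).
      assert (((4-s)^2-4*t-8) <= 0) by (assert (0 <= s*(4-s)) by (apply Rmult_le_pos; lra); simpl; lra).
      assert (0 <= (-((4-s)^2-4*t-8))*z) by (apply Rmult_le_pos; lra).
      assert (0 <= s*(s+t-1)) by (apply Rmult_le_pos; lra). lra.
    + left. apply Rinv_0_lt_compat. apply Rmult_lt_0_compat; [apply Rmult_lt_0_compat|]; lra.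
Qed.

Lemma rsum_lin2 n m f g : rsum n (fun i => f i - m * g i) = rsum n f - m * rsum n g.
Proof. induction n; simpl; [ring|rewrite IHn; ring]. Qed.

Lemma r_le_1 n p q r R0 : (0 < n)%nat -> in_Gamma n p -> in_Gamma n q ->
  (forall i, (i < n)%nat -> r <= p i / q i <= R0) -> r <= 1 <= R0.
Proof.
  intros Hn [Hp Sp] [Hq Sq] Hr. split.
  - destruct (Rle_lt_dec r 1) as [|C]; auto. exfalso.
    assert (rsum n q < rsum n p); [|lra].
    apply rsum_lt; auto. intros i Hi. specialize (Hr i Hi). pose proof (Hq i Hi).
    assert (1 < p i / q i) by lra. apply (Rmult_lt_compat_r (q i)) in H0; auto.
    unfold Rdiv in H0. rewrite Rmult_assoc, Rinv_l, Rmult_1_l, Rmult_1_r in H0; lra.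
  - destruct (Rle_lt_dec 1 R0) as [|C]; auto. exfalso.
    assert (rsum n p < rsum n q); [|lra].
    apply rsum_lt; auto. intros i Hi. specialize (Hr i Hi). pose proof (Hq i Hi).
    assert (p i / q i < 1) by lra. apply (Rmult_lt_compat_r (q i)) in H0; auto.
    unfold Rdiv in H0. rewrite Rmult_assoc, Rinv_l, Rmult_1_l, Rmult_1_r in H0; lra.
Qed.

Lemma bounds n p q r R0 s t : (0 < n)%nat -> in_Gamma n p -> in_Gamma n q -> 0 < r ->
  (forall i, (i < n)%nat -> r <= p i / q i <= R0) -> 0 <= s <= 4 ->
  (forall m, (forall y, r <= y <= R0 -> m <= coef s t y) -> m * Phi n t p q <= zeta n s q p) /\
  (forall M, (forall y, r <= y <= R0 -> coef s t y <= M) -> zeta n s q p <= M * Phi n t p q).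
Proof.
  intros Hn Gp Gq Hr Hi Hs.
  pose proof (r_le_1 n p q r R0 Hn Gp Gq Hi) as Hr1.
  destruct (psi_rep s) as [ps [ps1 [A1 [A2 [A3 [A4 A5]]]]]].
  destruct (phi_rep t) as [ph [ph1 [B1 [B2 [B3 [B4 B5]]]]]].
  rewrite (A5 n p q Gp Gq), (B5 n p q Gp Gq).
  destruct Gq as [Hq _].
  split.
  - intros m Hm.
    assert (Hh : forall x, r <= x <= R0 -> 0 <= ps x - m * ph x).
    { apply (convex_nonneg (fun x => ps x - m * ph x) (fun x => ps1 x - m * ph1 x)
         (fun x => psi2 s x - m * phi2 t x) r R0); auto.
      - intros x Hx. apply (derivable_pt_lim_minus ps (fun x => m * ph x)); [apply is_derive_Reals; apply A3; auto|].
        apply (derivable_pt_lim_scal ph m); apply is_derive_Reals; apply B3; auto.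
      - intros x Hx. apply (derivable_pt_lim_minus ps1 (fun x => m * ph1 x)); [apply is_derive_Reals; apply A4; auto|].
        apply (derivable_pt_lim_scal ph1 m); apply is_derive_Reals; apply B4; auto.
      - rewrite A1, B1; ring.
      - rewrite A2, B2; ring.
      - intros x Hx. rewrite (psi2_coef s t x) by lra.
        pose proof (Hm x Hx). assert (0 < phi2 t x) by apply exp_pos.
        replace (coef s t x * phi2 t x - m * phi2 t x) with ((coef s t x - m) * phi2 t x) by ring.
        apply Rmult_le_pos; lra. }
    assert (0 <= rsum n (fun i => q i * ps (p i / q i)) - m * rsum n (fun i => q i * ph (p i / q i))); [|lra].
    rewrite <- rsum_lin2. apply rsum_nonneg. intros i Hi'.
    replace (q i * ps (p i / q i) - m * (q i * ph (p i / q i))) with (q i * (ps (p i / q i) - m * ph (p i / q i))) by ring.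
    apply Rmult_le_pos; [left; apply Hq; auto|apply Hh; apply Hi; auto].
  - intros M HM.
    assert (Hh : forall x, r <= x <= R0 -> 0 <= M * ph x - ps x).
    { apply (convex_nonneg (fun x => M * ph x - ps x) (fun x => M * ph1 x - ps1 x)
         (fun x => M * phi2 t x - psi2 s x) r R0); auto.
      - intros x Hx. apply (derivable_pt_lim_minus (fun x => M * ph x) ps); [|apply is_derive_Reals; apply A3; auto].
        apply (derivable_pt_lim_scal ph M); apply is_derive_Reals; apply B3; auto.
      - intros x Hx. apply (derivable_pt_lim_minus (fun x => M * ph1 x) ps1); [|apply is_derive_Reals; apply A4; auto].
        apply (derivable_pt_lim_scal ph1 M); apply is_derive_Reals; apply B4; auto.
      - rewrite A1, B1; ring.
      - rewrite A2, B2; ring.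
      - intros x Hx. rewrite (psi2_coef s t x) by lra.
        pose proof (HM x Hx). assert (0 < phi2 t x) by apply exp_pos.
        replace (M * phi2 t x - coef s t x * phi2 t x) with ((M - coef s t x) * phi2 t x) by ring.
        apply Rmult_le_pos; lra. }
    assert (0 <= M * rsum n (fun i => q i * ph (p i / q i)) - rsum n (fun i => q i * ps (p i / q i))); [|lra].
    rewrite <- rsum_scal.
    replace (rsum n (fun i => M * (q i * ph (p i / q i))) - rsum n (fun i => q i * ps (p i / q i)))
      with (rsum n (fun i => M * (q i * ph (p i / q i))) - 1 * rsum n (fun i => q i * ps (p i / q i))) by ring.
    rewrite <- rsum_lin2. apply rsum_nonneg. intros i Hi'.
    replace (M * (q i * ph (p i / q i)) - 1 * (q i * ps (p i / q i))) with (q i * (M * ph (p i / q i) - ps (p i / q i))) by ring.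
    apply Rmult_le_pos; [left; apply Hq; auto|apply Hh; apply Hi; auto].
Qed.

Theorem theorem4p1 (n : nat) (p q : nat -> R) (r R0 s t : R) :
  (2 <= n)%nat ->
  in_Gamma n p -> in_Gamma n q ->
  0 < r -> r <= R0 ->
  (forall i, (i < n)%nat -> r <= p i / q i <= R0) ->
  0 <= s <= 4 ->
  ((t <= -1 -> s + t <= 1 ->
     coef s t r * Phi n t p q <= zeta n s q p <= coef s t R0 * Phi n t p q) /\
   (-1 <= t -> 2 <= s + t ->
     coef s t R0 * Phi n t p q <= zeta n s q p <= coef s t r * Phi n t p q)).
Proof.
  intros Hn Gp Gq Hr HrR Hi Hs.
  assert (Hn0 : (0 < n)%nat) by lia.
  destruct (bounds n p q r R0 s t Hn0 Gp Gq Hr Hi Hs) as [Lo Up].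
  split; intros Ht Hst; split.
  - apply Lo. intros y Hy. apply coef_incr; lra.
  - apply Up. intros y Hy. apply coef_incr; lra.
  - apply Lo. intros y Hy. apply coef_decr; lra.
  - apply Up. intros y Hy. apply coef_decr; lra.
Qed.
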